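(* Let $P\in\mathbb N_+$, $M\ge2$, $d=\lceil 2P\ln M\rceil$, and let $\mathcal Y$ be a finite set. Let $\mu^{(1)}_1,\dots,\mu^{(1)}_M,\mu^{(2)}_1,\dots,\mu^{(2)}_M:\mathcal Y\to\{0,1/P,2/P,\dots,1\}$. For a finite sequence $\mathbf y=(y_1,\dots,y_n)\in\mathcal Y^n$ define the row vector $\overline{\mathbf M}_{\mathbf y}\in\mathbb R^{2M}$ by $\overline{\mathbf M}_{\mathbf y}=\big(\prod_{q=1}^n\mu^{(1)}_1(y_q),\dots,\prod_{q=1}^n\mu^{(1)}_M(y_q),\prod_{q=1}^n\mu^{(2)}_1(y_q),\dots,\prod_{q=1}^n\mu^{(2)}_M(y_q)\big)$, with $\overline{\mathbf M}_{\emptyset}=(1,\dots,1)$. Then for every $\mathbf y$ of length $n>d$, the vector $\overline{\mathbf M}_{\mathbf y}$ lies in the linear span of $\{\overline{\mathbf M}_{\mathbf y_J}: J\subseteq[n],\ |J|\le d\}$, where $\mathbf y_J=(y_j)_{j\in J}$ (with $\mathbf y_\emptyset=\emptyset$).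
   Context: $\ln$ denotes the natural logarithm. In the paper's application $\mathcal Y=\mathcal S\times\mathcal A\times\mathcal Z$ and $\mu^{(b)}_m(y)$ is the probability of reward $z$ at state–action $(s,a)$ in context $m$ of model $b$. *)

(* Defs.v *)
From HB Require Import structures.
From mathcomp Require Import all_boot all_order all_algebra.
From mathcomp Require Import all_classical all_reals all_analysis.
Set Implicit Arguments. Unset Strict Implicit. Unset Printing Implicit Defensive.
Import Order.TTheory GRing.Theory Num.Theory.
Local Open Scope ring_scope.

Definition dbound (R : realType) (P M : nat) : int :=
  Num.ceil (2 * P%:R * ln (M%:R : R)).

Definition Mbar (R : realType) (Y : finType) (M : nat)
  (mu1 mu2 : 'I_M -> Y -> R) (s : seq Y) : 'rV[R]_(M + M) :=
  row_mx (\row_(m < M) \prod_(x <- s) mu1 m x)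
         (\row_(m < M) \prod_(x <- s) mu2 m x).

(* y_J = (y_j)_{j in J}, in increasing order of indices *)
Definition subseqJ (Y : Type) (n : nat) (y : 'I_n -> Y) (J : {set 'I_n}) : seq Y :=
  [seq y j | j <- enum J].

(* Main.v *)
Require Import Defs.
From HB Require Import structures.
From mathcomp Require Import all_boot all_order all_algebra.
From mathcomp Require Import all_classical all_reals all_analysis.
From mathcomp Require Import lra ring zify.
Import Order.TTheory GRing.Theory Num.Theory.
Local Open Scope ring_scope.
Lemma pade (R : realType) (y : R) : 0 <= y -> expR y * (2 - y) <= 2 + y.
Proof.
move=> y0.
pose h : R -> R := (expR * (cst 2 - id)) - (cst 2 + id).
have hd : forall x : R, is_derive x (1:R) h (expR x * (1 - x) - 1).
  move=> x; rewrite /h.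
  apply: is_derive_eq.
  change (expR x * (0 - 1) + (2 - x) * expR x - (0 + 1) = expR x * (1 - x) - 1).
  ring.
have hle : forall x : R, expR x * (1 - x) - 1 <= 0.
  move=> x; rewrite subr_le0.
  have [x1|x1] := leP x 1.
    have := expR_ge1Dx (- x); rewrite -[1 + - x]/(1 - x) => H.
    apply: (le_trans (ler_wpM2l (expR_ge0 x) H)).
    by rewrite -expRD subrr expR0.
  apply: (le_trans (y := 0)); last by [].
  by rewrite mulr_ge0_le0 ?expR_ge0 // subr_le0 ltW.
have [-> | yp] := eqVneq y 0.
  by rewrite expR0; lra.
have y0' : 0 < y by rewrite lt_def yp y0.
have cont := derivable_within_continuous (f := h) (i := `[0, y]%R) (fun x _ => @ex_derive _ _ _ _ _ _ _ (hd x)).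
have [c _ Hc] := MVT y0' (fun x _ => hd x) cont.
have : h y - h 0 <= 0 by rewrite Hc mulr_le0_ge0 // subr_ge0.
rewrite /h /cst /=. change (expR y * (2 - y) - (2 + y) - (expR 0 * (2 - 0) - (2 + 0)) <= 0 -> expR y * (2 - y) <= 2 + y). rewrite expR0.
lra.
Qed.
Lemma numeric (R : realType) (P M t : nat) : (0 < P)%N -> (2 <= M)%N ->
  2 * P%:R * ln (M%:R : R) + 1 <= t%:R -> ((M + M) * P ^ t < P.+1 ^ t)%N.
Proof.
move=> P0 M2 ht.
rewrite -(ltr_nat R) natrM !natrX.
have Pr : (1:R) <= P%:R by rewrite ler1n.
set y : R := 2 / (2 * P%:R + 1).
have hy : y * (2 * P%:R + 1) = 2 by rewrite /y divfK //; lra.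
have y0 : 0 <= y by rewrite /y divr_ge0 //; lra.
set e := expR y.
have pe := @pade R y y0; rewrite -/e in pe.
have e0 : 0 <= e by exact: expR_ge0.
have ey : e * P%:R <= P.+1%:R.
  have h1 := ler_wpM2r (_ : 0 <= 2 * P%:R + 1) pe.
  rewrite -addn1 natrD.
  have h2 : e * y * (2 * P%:R + 1) = 2 * e by rewrite -mulrA hy mulrC.
  nra.
set L := ln (M%:R : R).
set l := ln (2 : R).
have Mp : (0:R) < M%:R by rewrite ltr0n; apply: leq_trans M2.
have l1 : l < 1.
  have h := expR_gt1Dx (oner_neq0 R).
  apply: (@lt_le_trans _ _ (ln (expR (1:R)))); last by rewrite expRK.
  rewrite /l ltr_ln ?posrE ?expR_gt0 //; lra.
have lL : l <= L.
  rewrite /l /L ler_ln ?posrE //.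
  by rewrite (ler_nat R 2 M).
have lt : l + L < t%:R * y.
  rewrite /L in ht; rewrite -/L in ht.
  have h2 : t%:R * y * (2 * P%:R + 1) = 2 * t%:R by rewrite -mulrA hy mulrC.
  rewrite -(@ltr_pM2r _ (2 * P%:R + 1)); last lra.
  rewrite h2.
  have h3 : 0 <= (P%:R - 1) * (L - l) by apply: mulr_ge0; lra.
  nra.
have eM : (M + M)%:R = expR (l + L).
  rewrite expRD /l /L !lnK ?posrE //.
  rewrite natrD; lra.
rewrite eM.
apply: (lt_le_trans (y := expR (t%:R * y) * P%:R ^+ t)).
  by rewrite ltr_pM2r ?exprn_gt0 ?ltr_expR //; lra.
rewrite expRM_natl -/e -exprMn.
apply: lerXn2r; rewrite ?nnegrE //; nra.
Qed.
Section Comb.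
Local Open Scope nat_scope.

Lemma card_count (K : finType) (P : nat) (A : {set K}) (h : K -> 'I_P.+1) :
  \sum_(j < P.+1) #|[set k in A | h k == j]| = #|A|.
Proof.
rewrite -sum1_card.
rewrite (partition_big h xpredT) //=.
apply: eq_bigr => j _.
rewrite -sum1_card; apply: eq_bigl => k; by rewrite inE.
Qed.

Lemma pigeon (K : finType) (P : nat) (A : {set K}) (h : K -> 'I_P.+1) :
  exists j : 'I_P.+1, (#|A| <= P.+1 * #|[set k in A | h k == j]|)%N.
Proof.
case: (boolP [exists j : 'I_P.+1, #|A| <= P.+1 * #|[set k in A | h k == j]|]).
  by move/existsP.
move/existsPn => H; exfalso.
have Hs : (\sum_(j < P.+1) (P.+1 * #|[set k in A | h k == j]|) <= \sum_(j < P.+1) #|A|.-1)%N.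
  apply: leq_sum => j _; have := H j; rewrite -ltnNge; lia.
rewrite -big_distrr /= card_count sum_nat_const card_ord in Hs.
have := H ord0; rewrite -ltnNge => H0.
move: Hs; rewrite /= -[#|A|](@prednK) /=; last by lia.
nia.
Qed.

Lemma cover (K I : finType) (P : nat) (g : K -> I -> 'I_P.+1) :
  forall (n : nat) (T : {set I}) (A : {set K}), #|T| = n ->
  (#|A| * P ^ n < P.+1 ^ n)%N ->
  exists r : I -> 'I_P.+1, forall k, k \in A -> exists2 q, q \in T & g k q = r q.
Proof.
elim=> [|n IH] T A hT hA.
  exists (fun _ => ord0) => k kA; exfalso.
  move: hA; rewrite !expn0 muln1 ltnS leqn0 => /eqP/cards0_eq A0.
  by rewrite A0 inE in kA.
have : (0 < #|T|)%N by rewrite hT.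
case/card_gt0P => q0 q0T.
have hT' : #|T :\ q0| = n by move: hT; rewrite (cardsD1 q0) q0T add1n => -[].
have [j hj] := @pigeon _ _ A (fun k => g k q0).
set B := [set k in A | g k q0 != j].
have hB : (#|[set k in A | g k q0 == j]| + #|B| = #|A|)%N.
  rewrite -(cardsID [set k | g k q0 == j] A); congr (_ + _); apply: eq_card => k;
  rewrite !inE //; exact: andbC.
have hBn : (#|B| * P ^ n < P.+1 ^ n)%N.
  move: hA; rewrite !expnS.
  set X := P ^ n; set Y := P.+1 ^ n.
  set a := #|A|; set b := #|B|; set c := #|[set k in A | g k q0 == j]|.
  move: hj hB; rewrite -/a -/b -/c => hj hB hA.
  have h0 : (P.+1 * b <= P * a)%N by lia.
  have h1 : (P.+1 * (b * X) < P.+1 * Y)%N.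
    rewrite mulnA; apply: leq_ltn_trans (leq_mul h0 (leqnn X)) _.
    by rewrite -mulnA mulnCA.
  by rewrite ltn_pmul2l in h1.
have [r' hr'] := IH (T :\ q0) B hT' hBn.
exists (fun q => if q == q0 then j else r' q) => k kA.
case: (eqVneq (g k q0) j) => [e|ne].
  by exists q0 => //; rewrite eqxx.
have kB : k \in B by rewrite inE kA ne.
have [q qT e] := hr' k kB.
move: qT; rewrite !inE => /andP[qq0 qT].
by exists q => //; rewrite (negbTE qq0).
Qed.
End Comb.

Lemma reduce (R : realType) (K I : finType) (x : K -> I -> R) (r : I -> R)
  (T : {set I}) :
  (forall k, exists2 q, q \in T & x k q = r q) ->
  exists w : {set I} -> R, (forall J, w J != 0 -> J \proper T) /\
   forall k, \prod_(q in T) x k q = \sum_(J : {set I} | J != T) w J * \prod_(q in J) x k q.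
Proof.
move=> hr.
pose G q := if q \in T then - r q else 1.
pose w0 (J : {set I}) := \prod_q (if q \in J then ((q \in T)%:R) else G q) : R.
exists (fun J => if J == T then 0 else - w0 J); split.
  move=> J; have [-> | JT] := eqVneq J T; first by rewrite !eqxx.
  rewrite oppr_eq0 => hJ.
  have sub : J \subset T.
    apply/fintype.subsetP => q qJ; apply/negPn/negP => qT.
    move: hJ; rewrite /w0 (bigD1 q) //= qJ (negbTE qT) mul0r eqxx //.
  by rewrite finset.properEneq sub JT.
move=> k.
have [q0 q0T hq0] := hr k.
have zero : \prod_q ((if q \in T then x k q else 0) + G q) = 0.
  rewrite (bigD1 q0) //= /G q0T hq0 subrr mul0r //.
rewrite bigA_distr in zero.
have term : forall J : {set I}, \prod_q (if q \in J then (if q \in T then x k q else 0) else G q) = (\prod_(q in J) x k q) * w0 J.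
  move=> J; rewrite /w0 [\prod_(q in J) _]big_mkcond -big_split /=; apply: eq_bigr => q _.
  by case: (q \in J); case: (q \in T); rewrite /= ?mulr1 ?mulr0 ?mul1r.
rewrite (bigD1 T) //= term in zero.
have w0T : w0 T = 1 by rewrite /w0; apply: big1 => q _; case: ifP => //; rewrite /G => ->.
rewrite w0T mulr1 in zero.
have e : \sum_(J : {set I} | J != T) (if J == T then 0 else - w0 J) * \prod_(q in J) x k q =
  - \sum_(J : {set I} | J != T) \prod_q (if q \in J then (if q \in T then x k q else 0) else G q).
  rewrite -sumrN; apply: eq_bigr => J JT.
  by rewrite term (negbTE JT) mulNr mulrC.
rewrite e; apply/eqP; rewrite -addr_eq0; exact/eqP.
Qed.

Definition nu (R : realType) (Y : finType) (M : nat)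
  (mu1 mu2 : 'I_M -> Y -> R) (k : 'I_(M + M)) (x : Y) : R :=
  match fintype.split k with inl m => mu1 m x | inr m => mu2 m x end.
Arguments nu {R Y M}.

Lemma MbarE (R : realType) (Y : finType) (M : nat)
  (mu1 mu2 : 'I_M -> Y -> R) (s : seq Y) :
  Mbar mu1 mu2 s = \row_k \prod_(x <- s) nu mu1 mu2 k x.
Proof.
apply/rowP => k; rewrite /Mbar !mxE /nu.
by case: (fintype.split k) => m; rewrite mxE.
Qed.

Theorem lemma8 (R : realType) (Y : finType) (P M : nat)
  (hP : (0 < P)%N) (hM : (2 <= M)%N)
  (mu1 mu2 : 'I_M -> Y -> R)
  (hmu1 : forall m y, exists k : nat, (k <= P)%N /\ mu1 m y = k%:R / P%:R)
  (hmu2 : forall m y, exists k : nat, (k <= P)%N /\ mu2 m y = k%:R / P%:R)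
  (n : nat) (y : 'I_n -> Y)
  (hn : dbound R P M < n%:Z) :
  exists c : {set 'I_n} -> R,
    Mbar mu1 mu2 [seq y i | i <- enum 'I_n] =
    \sum_(J : {set 'I_n} | (#|J|%:Z <= dbound R P M)) c J *: Mbar mu1 mu2 (subseqJ y J).
Proof.
set D := dbound R P M.
pose F (J : {set 'I_n}) : 'rV[R]_(M + M) := \row_k \prod_(q in J) nu mu1 mu2 k (y q).
have FJ : forall J, Mbar mu1 mu2 (subseqJ y J) = F J.
  move=> J; rewrite MbarE /subseqJ; apply/rowP => k; rewrite !mxE.
  by rewrite big_map big_enum.
have FT : Mbar mu1 mu2 [seq y i | i <- enum 'I_n] = F [set: 'I_n]%SET.
  rewrite MbarE; apply/rowP => k; rewrite !mxE big_map big_enum.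
  by apply: eq_bigl => q; rewrite finset.in_setT.
have hk : forall k q, exists j : 'I_P.+1, nu mu1 mu2 k (y q) = j%:R / P%:R.
  move=> k q; rewrite /nu; case: (fintype.split k) => m.
    by have [j [jP ->]] := hmu1 m (y q); exists (Ordinal (jP : (j < P.+1)%N)).
  by have [j [jP ->]] := hmu2 m (y q); exists (Ordinal (jP : (j < P.+1)%N)).
have [kap hkap] : {kap : 'I_(M + M) -> 'I_n -> 'I_P.+1 &
    forall k q, nu mu1 mu2 k (y q) = (kap k q)%:R / P%:R}.
  have h1 : forall k, exists f : 'I_n -> 'I_P.+1, forall q, nu mu1 mu2 k (y q) = (f q)%:R / P%:R.
    move=> k; have [f hf] := choice (hk k); by exists f.
  have [f hf] := choice h1; by exists f.
have D0 : (0 <= D)%R.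
  rewrite /D /dbound ceil_ge0.
  apply: (@lt_le_trans _ _ 0); first by rewrite ltrN10.
  apply: mulr_ge0; first by rewrite mulr_ge0 ?ler0n.
  by apply: ln_ge0; rewrite ler1n; apply: leq_trans hM.
have main : forall m (T : {set 'I_n}), (#|T| <= m)%N ->
    exists c : {set 'I_n} -> R, F T = \sum_(J : {set 'I_n} | (#|J|%:Z <= D)) c J *: F J.
  have small : forall T : {set 'I_n}, (#|T|%:Z <= D)%R ->
      exists c : {set 'I_n} -> R, F T = \sum_(J : {set 'I_n} | (#|J|%:Z <= D)) c J *: F J.
    move=> T hT; exists (fun J => (J == T)%:R).
    rewrite (bigD1 T) //= eqxx scale1r big1 ?addr0 // => J /andP[_ JT].
    by rewrite (negbTE JT) scale0r.
  elim=> [|m IH] T hT.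
    apply: small; move: hT; rewrite leqn0 => /eqP ->; exact: D0.
  case: (boolP (#|T|%:Z <= D)%R) => [hs|hs]; first exact: small.
  have hlt : (D < #|T|%:Z)%R by rewrite ltNge.
  have ht : 2 * P%:R * ln (M%:R : R) + 1 <= #|T|%:R.
    have h1 : (D + 1 <= #|T|%:Z)%R by rewrite lezD1.
    have h2 : ((D + 1)%:~R <= (#|T|%:Z)%:~R :> R) by rewrite ler_int.
    rewrite intrD in h2.
    have h3 := ceil_ge (2 * P%:R * ln (M%:R : R)); rewrite -/(dbound R P M) -/D in h3.
    change ((#|T|%:Z)%:~R) with (#|T|%:R : R) in h2.
    lra.
  have hcard := @numeric R P M #|T| hP hM ht.
  have hA : (#|[set: 'I_(M + M)]%SET| * P ^ #|T| < P.+1 ^ #|T|)%N.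
    by rewrite finset.cardsT card_ord.
  have [r hr] := @cover _ _ P kap #|T| T [set: 'I_(M + M)]%SET erefl hA.
  have hr' : forall k, exists2 q, q \in T &
      nu mu1 mu2 k (y q) = (r q)%:R / P%:R.
    move=> k; have [q qT e] := hr k (finset.in_setT k).
    by exists q => //; rewrite hkap e.
  have [w [wp wE]] := @reduce R _ _ _ _ T hr'.
  have hc : forall J : {set 'I_n}, exists c : {set 'I_n} -> R,
      w J *: F J = w J *: \sum_(J' : {set 'I_n} | (#|J'|%:Z <= D)) c J' *: F J'.
    move=> J; have [w0|wn0] := eqVneq (w J) 0.
      by exists (fun _ => 0); rewrite w0 !scale0r.
    have := proper_card (wp J wn0) => hJ.
    have hJm : (#|J| <= m)%N by move: hJ hT; lia.
    have [c hc] := IH J hJm.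
    by exists c; rewrite hc.
  have [c hcE] := choice hc.
  exists (fun J' => \sum_(J : {set 'I_n} | J != T) w J * c J J').
  have -> : F T = \sum_(J : {set 'I_n} | J != T) w J *: F J.
    apply/rowP => k; rewrite !mxE summxE wE; apply: eq_bigr => J _.
    by rewrite !mxE.
  rewrite (eq_bigr _ (fun J _ => hcE J)).
  under eq_bigr do rewrite scaler_sumr.
  rewrite exchange_big /=; apply: eq_bigr => J' _.
  rewrite scaler_suml; apply: eq_bigr => J _.
  by rewrite scalerA.
have hn' : (#|[set: 'I_n]%SET| <= n)%N by rewrite finset.cardsT card_ord.
have [c hc] := main n [set: 'I_n]%SET hn'.
exists c; rewrite FT hc; apply: eq_bigr => J _; by rewrite FJ.
Qed.
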